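(* Let $X$ be a set of pointed Kripke models, $\Lambda$ a normal modal logic sound with respect to $X$, and $D\subseteq\boldsymbol{\mathcal{L}}_{\Lambda}$ any descriptor for $X$. Then the space $(X_D,\mathcal{T}_D)$ is totally disconnected.
   Context: Signature: countable non-empty sets $\Phi$, $\mathcal{I}$; $\mathcal{L}$: $\varphi ::= \top\mid p\mid\neg\varphi\mid\varphi\wedge\varphi\mid\Box_i\varphi$ on pointed Kripke models, standard semantics. $\boldsymbol{\varphi}$: formulas $\Lambda$-provably equivalent to $\varphi$; $\boldsymbol{\mathcal{L}}_{\Lambda}=\{\boldsymbol{\varphi}\}$. A descriptor is $D\subseteq\boldsymbol{\mathcal{L}}_{\Lambda}$; $\boldsymbol{x}_D=\{y\in X:\forall\boldsymbol{\varphi}\in D,\ y\models\varphi\iff x\models\varphi\}$, $X_D=\{\boldsymbol{x}_D:x\in X\}$. The Stone-like topology $\mathcal{T}_D$ on $X_D$ is generated by the subbasis of sets $\{\boldsymbol{x}:x\models\varphi\}$ and $\{\boldsymbol{x}:x\models\neg\varphi\}$ for $\boldsymbol{\varphi}\in D$. *)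

(* Defs.v *)
From HB Require Import structures.
From mathcomp Require Import all_boot all_order.
From mathcomp Require Import boolp classical_sets topology separation_axioms.
Set Implicit Arguments. Unset Strict Implicit. Unset Printing Implicit Defensive.
Local Open Scope classical_set_scope.

Section Syntax.
Variables (Phi Ag : Type).
Inductive formula : Type :=
| fTop : formula
| fVar : Phi -> formula
| fNeg : formula -> formula
| fAnd : formula -> formula -> formula
| fBox : Ag -> formula -> formula.
End Syntax.
Arguments fTop {Phi Ag}.

HB.instance Definition _ (Phi Ag : Type) := gen_eqMixin (formula Phi Ag).
HB.instance Definition _ (Phi Ag : Type) := gen_choiceMixin (formula Phi Ag).
HB.instance Definition _ (Phi Ag : Type) := isPointed.Build (formula Phi Ag) fTop.

Section Kripke.
Variables (Phi Ag : countType).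
Local Notation form := (formula Phi Ag).

Definition fImp (a b : form) : form := fNeg (fAnd a (fNeg b)).
Definition fIff (a b : form) : form := fAnd (fImp a b) (fImp b a).

Record kripke := Kripke {
  world : Type;
  krel : Ag -> world -> world -> Prop;
  kval : Phi -> world -> Prop }.

Record pointed := Pointed { pmodel : kripke; ppoint : world pmodel }.

Fixpoint sat (M : kripke) (w : world M) (f : form) : Prop :=
  match f with
  | fTop => True
  | fVar p => kval p w
  | fNeg a => ~ sat w a
  | fAnd a b => sat w a /\ sat w b
  | fBox i a => forall v, krel i w v -> sat v a
  end.

Definition psat (x : pointed) (f : form) : Prop := sat (ppoint x) f.

(* propositional tautologies: boxed subformulas are treated as atoms *)
Fixpoint peval (v : form -> bool) (f : form) : bool :=
  match f with
  | fTop => true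
  | fVar _ => v f
  | fNeg a => ~~ peval v a
  | fAnd a b => peval v a && peval v b
  | fBox _ _ => v f
  end.
Definition tautology (f : form) := forall v, peval v f = true.

Fixpoint subst (s : Phi -> form) (f : form) : form :=
  match f with
  | fTop => fTop
  | fVar p => s p
  | fNeg a => fNeg (subst s a)
  | fAnd a b => fAnd (subst s a) (subst s b)
  | fBox i a => fBox i (subst s a)
  end.

Definition normal_logic (L : set form) : Prop :=
  [/\ (forall f, tautology f -> L f),
      (forall i a b, L (fImp (fBox i (fImp a b)) (fImp (fBox i a) (fBox i b)))),
      (forall a b, L (fImp a b) -> L a -> L b),
      (forall i a, L a -> L (fBox i a)) &
      (forall s a, L a -> L (subst s a))].

Definition sound (L : set form) (X : set pointed) : Prop :=
  forall f x, L f -> X x -> psat x f.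

Definition fclass (L : set form) (f : form) : set form := [set g | L (fIff f g)].
Definition Lclasses (L : set form) : set (set form) := [set fclass L f | f in setT].

Definition descriptor (L : set form) (D : set (set form)) := D `<=` Lclasses L.

Definition xD (L : set form) (X : set pointed) (D : set (set form)) (x : pointed)
  : set pointed :=
  [set y | X y /\ forall f, D (fclass L f) -> (psat y f <-> psat x f)].

Definition XD_set (L : set form) (X : set pointed) (D : set (set form))
  : set (set pointed) := [set xD L X D x | x in X].

Definition XD (L : set form) (X : set pointed) (D : set (set form)) :=
  {A : set pointed | XD_set L X D A}.

HB.instance Definition _ L X D := gen_eqMixin (XD L X D).
HB.instance Definition _ L X D := gen_choiceMixin (XD L X D).

(* subbasis: index (f, true) gives {x_D : x |= f}, (f, false) gives {x_D : x |= ~f},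
   for [f] in D *)
Definition XD_subbase_dom (L : set form) (D : set (set form)) : set (form * bool) :=
  [set fb | D (fclass L fb.1)].
Definition XD_subbase (L : set form) (X : set pointed) (D : set (set form))
  (fb : form * bool) : set (XD L X D) :=
  [set A | exists2 x, X x /\ sval A = xD L X D x &
     psat x (if fb.2 then fb.1 else fNeg fb.1)].

HB.instance Definition _ L X D :=
  isSubBaseTopological.Build (XD L X D) (@XD_subbase_dom L D) (@XD_subbase L X D).

End Kripke.

(* Main.v *)
Require Import Defs.
From mathcomp Require Import all_boot boolp classical_sets topology separation_axioms.
From mathcomp Require Import finmap.
Local Open Scope classical_set_scope.

Section Aux.
Variables (Phi Ag : countType) (X : set (pointed Phi Ag)) (L : set (formula Phi Ag))
  (D : set (set (formula Phi Ag))).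

Lemma xD_self x : X x -> xD L X D x x.
Proof. by move=> Xx; split. Qed.

Lemma subbase_iff (A : XD L X D) x f b : X x -> sval A = xD L X D x ->
  D (fclass L f) ->
  XD_subbase (f, b) A <-> psat x (if b then f else fNeg f).
Proof.
move=> Xx Ax Df; split.
  case=> x' [Xx' Ax'] /= H.
  have : xD L X D x x' by rewrite -Ax Ax'; exact: xD_self.
  case=> _ /(_ f Df) E.
  by case: b H => /= H; rewrite /psat /= -/(psat x' f) -/(psat x f) -?E.
by move=> H; exists x.
Qed.

Lemma subbase_open fb : XD_subbase_dom L D fb -> open (@XD_subbase _ _ L X D fb).
Proof.
move=> Dfb.
exists [set @XD_subbase _ _ L X D fb]; last by rewrite bigcup_set1.
move=> A ->; exists (fset1 fb); last by rewrite set_fset1 bigcap_set1.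
move=> ?; rewrite /= inE => /eqP ->. exact/mem_set.
Qed.

Lemma subbase_compl f b : D (fclass L f) ->
  ~` @XD_subbase _ _ L X D (f, b) = @XD_subbase _ _ L X D (f, ~~ b).
Proof.
move=> Df; apply/seteqP; split => A /=;
  case: (svalP A) => x Xx Ax;
  have H1 := subbase_iff A x f b Xx (esym Ax) Df;
  have H2 := subbase_iff A x f (~~ b) Xx (esym Ax) Df;
  move: H1 H2; case: b => /=; rewrite /psat /setC /=; case: (pselect (sat (ppoint x) f)); tauto.
Qed.

Lemma subbase_clopen f b : D (fclass L f) -> clopen (@XD_subbase _ _ L X D (f, b)).
Proof.
move=> Df; split; first exact: subbase_open.
rewrite -openC subbase_compl //; exact: subbase_open.
Qed.

End Aux.

Theorem proposition21 (Phi Ag : countType) (hPhi : inhabited Phi) (hAg : inhabited Ag)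
  (X : set (pointed Phi Ag)) (L : set (formula Phi Ag))
  (HL : normal_logic L) (Hsound : sound L X)
  (D : set (set (formula Phi Ag))) (HD : descriptor L D) :
  totally_disconnected [set: XD L X D].
Proof.
apply: zero_dimension_totally_disconnected => A B AB.
case: (svalP A) => x Xx Ax; case: (svalP B) => y Xy By.
have [f [Df Hf]] : exists f, D (fclass L f) /\ ~ (psat x f <-> psat y f).
  apply: contrapT => Hn; move/eqP: AB; apply.
  apply: eq_sig_hprop; first by move=> ? ? ?; exact: Prop_irrelevance.
  rewrite -Ax -By; apply/seteqP; split => z [Xz Hz]; split => // g Dg.
    rewrite Hz //; split => H; apply: contrapT => H'; apply: Hn; exists g; tauto.
  rewrite Hz //; split => H; apply: contrapT => H'; apply: Hn; exists g; tauto.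
exists (@XD_subbase _ _ L X D (f, `[< psat x f >])); split.
- exact: subbase_clopen.
- rewrite (@subbase_iff _ _ X L D A x f _ Xx (esym Ax) Df).
  by case: asboolP => //= H; rewrite /psat /=.
- rewrite (@subbase_iff _ _ X L D B y f _ Xy (esym By) Df).
  case: asboolP => //= H; rewrite /psat /=; tauto.
Qed.
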